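(* Let $n\ge 2$ and let $\zeta_1,\dots,\zeta_{n-1}$ be the positive roots of $U'_{2n-1}$. For each $i$, the value $(SU_{2n-1})(\zeta_i)$, viewed as a polynomial in $x$, vanishes exactly at \[ x=\zeta_i^2-\frac{2}{(2n+1)(2n-1)}. \] Consequently the roots of the Jeff polynomial $J(x)$ are exactly the $n-1$ real numbers $\zeta_i^2-\frac{2}{(2n-1)(2n+1)}$, $i=1,\dots,n-1$.
   Context: $T_m,U_m$ are Chebyshev polynomials: $T_m(\cos\theta)=\cos m\theta$, $U_m(\cos\theta)=\sin((m+1)\theta)/\sin\theta$. For an indeterminate $x$, \[ (SU_{2n-1})(z)=\frac12\int_{-z}^{z}U'_{2n-1}(t)(x-t^2)\,dt=(x-z^2)U_{2n-1}(z)+\frac{T_{2n+1}(z)}{2n+1}+\frac{T_{2n-1}(z)}{2n-1}. \] The Jeff polynomial $J(x)\in\mathbb{Z}[x]$ is the (up to sign unique) integer polynomial with coprime coefficients that is a nonzero real scalar multiple of $\prod_{i=1}^{n-1}(SU_{2n-1})(\zeta_i)$. *)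

(* Defs.v *)
From HB Require Import structures.
From mathcomp Require Import all_boot all_order all_algebra.
Set Implicit Arguments. Unset Strict Implicit. Unset Printing Implicit Defensive.
Import Order.TTheory GRing.Theory Num.Theory.
Local Open Scope ring_scope.

(* Chebyshev polynomials via the three-term recurrence:
   T_0 = 1, T_1 = X, T_{m+2} = 2X T_{m+1} - T_m;
   U_0 = 1, U_1 = 2X, U_{m+2} = 2X U_{m+1} - U_m.
   (So T_m(cos t) = cos(m t), U_m(cos t) = sin((m+1)t)/sin t.) *)
Fixpoint cheb_pair {R : nzRingType} (a0 a1 : {poly R}) (m : nat)
  : {poly R} * {poly R} :=
  match m with
  | 0 => (a0, a1)
  | m'.+1 => let p := cheb_pair a0 a1 m' in
             (p.2, 'X *+ 2 * p.2 - p.1)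
  end.

Definition chebT {R : nzRingType} (m : nat) : {poly R} := (cheb_pair 1 'X m).1.
Definition chebU {R : nzRingType} (m : nat) : {poly R} := (cheb_pair 1 ('X *+ 2) m).1.

(* (S U_{2n-1})(z), viewed as a polynomial in the indeterminate x:
   (x - z^2) U_{2n-1}(z) + T_{2n+1}(z)/(2n+1) + T_{2n-1}(z)/(2n-1). *)
Definition SU {R : fieldType} (n : nat) (z : R) : {poly R} :=
  ('X - (z ^+ 2)%:P) * ((chebU (2 * n - 1)).[z])%:P
  + ((chebT (2 * n + 1)).[z] / (2 * n + 1)%:R)%:P
  + ((chebT (2 * n - 1)).[z] / (2 * n - 1)%:R)%:P.

(* Main.v *)
Require Import Defs.
From HB Require Import structures.
From mathcomp Require Import all_boot all_order all_algebra.
From mathcomp Require Import ring zify.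
Import Order.TTheory GRing.Theory Num.Theory.
Local Open Scope ring_scope.

Section Cheb.
Variable R : comNzRingType.

Lemma TSS k : chebT k.+2 = 'X *+ 2 * chebT k.+1 - chebT k :> {poly R}.
Proof. by []. Qed.
Lemma USS k : chebU k.+2 = 'X *+ 2 * chebU k.+1 - chebU k :> {poly R}.
Proof. by []. Qed.
Lemma T0 : chebT 0 = 1 :> {poly R}. Proof. by []. Qed.
Lemma T1 : chebT 1 = 'X :> {poly R}. Proof. by []. Qed.
Lemma U0 : chebU 0 = 1 :> {poly R}. Proof. by []. Qed.
Lemma U1 : chebU 1 = 'X *+ 2 :> {poly R}. Proof. by []. Qed.

Lemma rec_eq (f g : nat -> {poly R}) :
  (forall k, f k.+2 = 'X *+ 2 * f k.+1 - f k) ->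
  (forall k, g k.+2 = 'X *+ 2 * g k.+1 - g k) ->
  f 0 = g 0 -> f 1 = g 1 -> forall k, f k = g k.
Proof.
move=> hf hg h0 h1 k.
suff: f k = g k /\ f k.+1 = g k.+1 by case.
elim: k => [|k [e1 e2]]; first by split.
by split=> //; rewrite hf hg e1 e2.
Qed.

Lemma Ti k : chebT k.+1 = chebU k.+1 - 'X * chebU k :> {poly R}.
Proof.
apply: (@rec_eq (fun k => chebT k.+1) (fun k => chebU k.+1 - 'X * chebU k)) => {k} [k|k||].
- by rewrite TSS.
- rewrite !USS; ring.
- rewrite T1 U1 U0; ring.
- rewrite TSS USS T1 T0 U1 U0; ring.
Qed.

Lemma T1a k : chebT k.+2 = 'X * chebT k.+1 - (1 - 'X ^+ 2) * chebU k :> {poly R}.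
Proof.
apply: (@rec_eq (fun k => chebT k.+2) (fun k => 'X * chebT k.+1 - (1 - 'X ^+ 2) * chebU k)) => {k} [k|k||].
- by rewrite TSS.
- rewrite TSS USS; ring.
- rewrite TSS T1 T0 U0; ring.
- rewrite !TSS T1 T0 U1; ring.
Qed.

Lemma T1b k : chebT k = 'X * chebT k.+1 + (1 - 'X ^+ 2) * chebU k :> {poly R}.
Proof.
apply: (@rec_eq (fun k => chebT k) (fun k => 'X * chebT k.+1 + (1 - 'X ^+ 2) * chebU k)) => {k} [k|k||].
- by rewrite TSS.
- rewrite TSS USS; ring.
- rewrite T1 T0 U0; ring.
- rewrite !TSS T1 T0 U1; ring.
Qed.

Lemma Pell k : chebT k.+1 ^+ 2 - ('X ^+ 2 - 1) * chebU k ^+ 2 = 1 :> {poly R}.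
Proof.
elim: k => [|k IH]; first by rewrite T1 U0; ring.
have e : chebU k.+1 = chebT k.+1 + 'X * chebU k :> {poly R} by rewrite Ti; ring.
rewrite T1a e -[RHS]IH; ring.
Qed.

Lemma dUSS k : (chebU k.+2)^`() = 'X *+ 2 * (chebU k.+1)^`() + chebU k.+1 *+ 2 - (chebU k)^`() :> {poly R}.
Proof. rewrite USS derivB derivM derivMn derivX; ring. Qed.

Lemma Dl k : (1 - 'X ^+ 2) * (chebU k)^`() = 'X * chebU k - (chebT k.+1) * k.+1%:R :> {poly R}.
Proof.
pose D k : {poly R} := (1 - 'X ^+ 2) * (chebU k)^`() - ('X * chebU k - (chebT k.+1) * k.+1%:R).
suff h: forall k, D k = 0.
  by apply/eqP; rewrite -subr_eq0; apply/eqP; exact: h.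
apply: (@rec_eq D (fun _ => 0 : {poly R})) => {k} [k|k||].
- rewrite /D dUSS USS (TSS k.+1).
  have h := T1b k.+1.
  move: (chebU k.+1) (chebU k) ((chebU k.+1)^`()) ((chebU k)^`()) (chebT k.+2) (chebT k.+1) h.
  move=> u1 u0 a b t2 t1 h.
  rewrite h; ring.
- ring.
- rewrite /D U0 T1 derivC; ring.
- rewrite /D U1 TSS T1 T0 derivMn derivX; ring.
Qed.
End Cheb.

Lemma core (R : rcfType) (k : nat) (hk : (0 < k)%N) (z : R)
  (hz : root (chebU k)^`() z) :
  (chebU k).[z] != 0 /\
  (chebT k.+2).[z] / (k.+2)%:R + (chebT k).[z] / k%:R =
  (chebU k).[z] * (2 / ((k.+2)%:R * k%:R)).
Proof.
have E1 := Dl R k. have E2 := T1a R k. have E3 := T1b R k. have E4 := Pell R k.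
move: hz E1 E2 E3 E4.
move: ((chebU k)^`()) => dU.
move: (chebT k.+2) (chebT k.+1) (chebT k) (chebU k) => T2 T1 T0 U.
rewrite /root => /eqP hz E1 E2 E3 E4.
rewrite mulr_natr in E1.
have {}E4 : T1 * T1 - ('X * 'X - 1) * (U * U) = 1 by rewrite -[RHS]E4; ring.
have e1 := congr1 (fun p => p.[z]) E1.
have e2 := congr1 (fun p => p.[z]) E2.
have e3 := congr1 (fun p => p.[z]) E3.
have e4 := congr1 (fun p => p.[z]) E4.
rewrite /= !hornerE hz in e1 e2 e3.
rewrite hornerMn -mulr_natr in e1.
move: e4; rewrite /= !(hornerD, hornerN, hornerM, hornerX, hornerC) => e4.
have nk : k%:R != 0 :> R by rewrite pnatr_eq0 -lt0n.
have nk1 : k.+1%:R != 0 :> R by rewrite pnatr_eq0.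
have nk2 : k.+2%:R != 0 :> R by rewrite pnatr_eq0.
move: e1 e2 e3 e4.
set u := U.[z]; set t1 := T1.[z].
set t2 := T2.[z]; set t0 := T0.[z].
move=> e1 e2 e3 e4.
have et1 : t1 = z * u / k.+1%:R.
  apply: (mulIf nk1); rewrite mulfVK //.
  move: e1; rewrite mulr0 => /eqP; rewrite eq_sym subr_eq0 => /eqP ->. done.
split.
  apply/negP=> /eqP u0.
  move: e4; rewrite et1 u0; rewrite !(mulr0, mul0r, expr0n) /= subrr => /eqP.
  by rewrite eq_sym oner_eq0.
rewrite e2 e3 et1.
field.
have h2 : 2 + k%:R = k.+2%:R :> R by rewrite -[k.+2]addn2 natrD addrC.
have h1 : 1 + k%:R = k.+1%:R :> R by rewrite -[k.+1]addn1 natrD addrC.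
by rewrite h1 h2 nk nk1 nk2.
Qed.

Theorem mainTheorem3 (R : rcfType) (n : nat) (hn : (2 <= n)%N)
  (zeta : 'I_(n.-1) -> R)
  (zeta_inj : injective zeta)
  (zeta_pos : forall i, 0 < zeta i)
  (zeta_root : forall i, root (chebU (2 * n - 1))^`() (zeta i))
  (zeta_all : forall z : R, 0 < z -> root (chebU (2 * n - 1))^`() z ->
                exists i, z = zeta i) :
  (forall i (x : R),
     root (SU n (zeta i)) x <->
     x = zeta i ^+ 2 - 2 / ((2 * n + 1)%:R * (2 * n - 1)%:R))
  /\
  (forall (J : {poly int}) (c : R),
     `|zcontents J| = 1 ->
     c != 0 ->
     map_poly intr J = c *: \prod_(i < n.-1) SU n (zeta i) ->
     (forall x : R, root (map_poly intr J) x <->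
        exists i, x = zeta i ^+ 2 - 2 / ((2 * n - 1)%:R * (2 * n + 1)%:R))
     /\
     map_poly intr J = (lead_coef (map_poly intr J)) *:
        \prod_(i < n.-1) ('X - (zeta i ^+ 2 - 2 / ((2 * n - 1)%:R * (2 * n + 1)%:R))%:P)).
Proof.
set k := (2 * n - 1)%N.
have hk : (0 < k)%N by rewrite /k; lia.
have ek2 : (2 * n + 1 = k.+2)%N by rewrite /k; lia.
have SUe : forall z : R, root (chebU k)^`() z ->
   SU n z = ((chebU k).[z])%:P * ('X - (z ^+ 2 - 2 / ((2 * n + 1)%:R * k%:R))%:P)
   /\ (chebU k).[z] != 0.
  move=> z hz; have [nu e] := @core R k hk z hz; split => //.
  rewrite /SU -/k ek2 -addrA -polyCD e polyCB polyCM; ring.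
split.
  move=> i x; have [e nu] := SUe _ (zeta_root i).
  rewrite e /root hornerM hornerC hornerXsubC mulf_eq0 (negbTE nu) /= subr_eq0.
  by split => [/eqP|->].
move=> J c _ cn hJ.
pose a i := zeta i ^+ 2 - 2 / ((2 * n - 1)%:R * (2 * n + 1)%:R) :> R.
have ea : forall i, zeta i ^+ 2 - 2 / ((2 * n + 1)%:R * k%:R) = a i.
  by move=> i; rewrite /a /k (mulrC (2 * n - 1)%:R).
have prodE : \prod_(i < n.-1) SU n (zeta i) =
   (\prod_(i < n.-1) (chebU k).[zeta i])%:P * \prod_(i < n.-1) ('X - (a i)%:P).
  rewrite rmorph_prod -big_split /=; apply: eq_bigr => i _.
  by rewrite (SUe _ (zeta_root i)).1 ea.
have nC : \prod_(i < n.-1) (chebU k).[zeta i] != 0.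
  by apply/prodf_neq0 => i _; exact: (SUe _ (zeta_root i)).2.
move: prodE nC.
set C := \prod_(i < n.-1) (chebU k).[zeta i].
set P := \prod_(i < n.-1) ('X - (a i)%:P) => prodE nC.
have hJ' : map_poly intr J = (c * C) *: P by rewrite hJ prodE mul_polyC scalerA.
have lc : lead_coef (map_poly intr J) = c * C.
  by rewrite hJ' lead_coefZ (monicP (monic_prod_XsubC _ _ _)) mulr1.
split; last by rewrite lc hJ'.
move=> x; rewrite hJ' rootZ ?mulf_neq0 //.
have -> : P = \prod_(y <- map a (enum 'I_n.-1)) ('X - y%:P) by rewrite big_map big_enum.
rewrite root_prod_XsubC; split.
  by move/mapP => [i _ ->]; exists i.
by move=> [i ->]; apply/mapP; exists i; rewrite ?mem_enum.
Qed.
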